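(* There is an absolute constant $C>0$ such that for every reduced integer $n\ge3$, $$\left|\Omega(n)-\frac{\log n}{\log\log n}\right|\le C\,\frac{\log n}{(\log\log n)^2}.$$
   Context: $\Omega(n)$ is the number of prime factors of $n$ counted with multiplicity. Let $p_i$ denote the $i$-th prime ($p_1=2$). A positive integer $\prod_i p_i^{a_i}$ (with $a_i=0$ for all sufficiently large $i$) is called reduced if $\left\lfloor\frac{a_i+1}{a_j+2}\right\rfloor<\frac{\log p_j}{\log p_i}$ for all $i,j\ne 1$, and $2^{a_1}<8p_j^2$ for every $j$ with $a_j=0$. *)

(* Defs.v *)
From Stdlib Require Import Reals.
From mathcomp Require Import all_boot.

Definition Omega (n : nat) : nat := \sum_(p <- primes n) logn p n.

(* n = prod_i p_i^{a_i} with a_i = logn p_i n.  Index i = 1 is the prime 2,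
   so "i, j <> 1" means the primes p, q are odd. *)
Definition reduced (n : nat) : Prop :=
  (0 < n)%N /\
  (forall p q : nat, prime p -> prime q -> p <> 2%N -> q <> 2%N ->
     Rlt (INR (divn (logn p n).+1 (logn q n).+2))
         (Rdiv (ln (INR q)) (ln (INR p)))) /\
  (forall q : nat, prime q -> logn q n = 0%N ->
     Rlt (INR (expn 2 (logn 2 n))) (Rmult 8 (pow (INR q) 2))).

(* Main.v *)
Require Import Defs.
From Stdlib Require Import Reals Lra Lia.
From HB Require Import structures.
From mathcomp Require Import all_boot zify.

Lemma big_restrict (R : Type) (idx : R) (op : Monoid.law idx) a b M (P : pred nat) (F : nat -> R) :
  (a <= b)%N -> (b <= M)%N ->
  \big[op/idx]_(a <= p < b | P p) F p =
  \big[op/idx]_(0 <= p < M | P p) (if (a <= p < b)%N then F p else idx).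
Proof.
move=> hab hbM.
rewrite [RHS](big_cat_nat _ (n := a)) //=; last by lia.
rewrite [X in op _ X](big_cat_nat _ (n := b) (m := a)) //=.
rewrite [X in op X _]big_nat_cond [X in op X _]big1; last first.
  move=> i /andP[] /andP[hi1 hi2] _; case: ifP => //; lia.
rewrite [X in op _ (op _ X)]big_nat_cond [X in op _ (op _ X)]big1; last first.
  move=> i /andP[] /andP[hi1 hi2] _; case: ifP => //; lia.
rewrite Monoid.mul1m Monoid.mulm1.
rewrite big_nat_cond [RHS]big_nat_cond; apply: eq_bigr => i /andP[] hi _.
by rewrite hi.
Qed.

Lemma logn_nonprime p c : ~~ prime p -> logn p c = 0%N.
Proof. by move=> hp; rewrite lognE (negbTE hp). Qed.

Lemma factor_prod c M : (0 < c)%N -> (c < M)%N ->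
  c = \prod_(0 <= p < M | prime p) p ^ logn p c.
Proof.
move=> hc hM.
rewrite -{1}(partnT hc) /partn.
rewrite (@big_restrict _ _ _ 0 c.+1 M) //.
rewrite [RHS]big_mkcond [LHS]big_mkcond; apply: eq_bigr => p _.
case: ifP => hr.
- rewrite /=; case: ifP => // hp.
  by rewrite logn_nonprime ?hp.
- case: ifP => // _.
  by rewrite ltn_log0 //; lia.
Qed.

Lemma bin_double_ge m : (2 ^ m <= 'C(m + m, m))%N.
Proof.
elim: m => [|m IH] //.
have -> : (m.+1 + m.+1 = (m + m).+2)%N by lia.
rewrite binS binS.
have h1 := leq_bin2l m (leqnSn (m + m)).
rewrite expnS; lia.
Qed.

Lemma div_double_le m q : (0 < q)%N ->
  ((m + m) %/ q <= (m %/ q) + (m %/ q) + (q <= m + m))%N.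
Proof.
move=> hq.
case: (leqP q (m + m)) => hqm /=.
- have e := divn_eq m q.
  have hr := ltn_pmod m hq.
  have -> : (m + m = (m %/ q + m %/ q) * q + (m %% q + m %% q))%N by lia.
  rewrite divnMDl //.
  have : ((m %% q + m %% q) %/ q < 2)%N by rewrite ltn_divLR //; lia.
  lia.
- by rewrite divn_small.
Qed.

Lemma logn_bin_le p m : prime p -> (0 < m)%N ->
  (p ^ logn p 'C(m + m, m) <= m + m)%N.
Proof.
move=> hp hm.
have hp1 := prime_gt1 hp.
set T := trunc_log p (m + m).
have hT : (p ^ T <= m + m)%N by apply: trunc_logP => //; lia.
suff hle : (logn p 'C(m + m, m) <= T)%N.
  apply: leq_trans hT; apply: leq_pexp2l => //; lia.
have hf := bin_fact (leq_addr m m).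
rewrite addnK in hf.
have hC : (0 < 'C(m + m, m))%N by rewrite bin_gt0; lia.
have hfm : (0 < m`! * m`!)%N by rewrite muln_gt0 fact_gt0.
have hl : (logn p 'C(m + m, m) + (logn p m`! + logn p m`!) = logn p (m + m)`!)%N.
  by rewrite -hf lognM // lognM ?fact_gt0.
have hext : (logn p m`! = \sum_(1 <= k < (m + m).+1) m %/ p ^ k)%N.
  rewrite logn_fact // [RHS](big_cat_nat _ (n := m.+1)) //=; last by lia.
  rewrite [X in (_ + X)%N]big_nat_cond [X in (_ + X)%N]big1 ?addn0 //.
  move=> k /andP[] /andP[hk1 hk2] _; apply: divn_small.
  have := ltn_expl k hp1; lia.
rewrite hext (logn_fact _ hp) in hl.
have hb : (\sum_(1 <= k < (m + m).+1) (m + m) %/ p ^ k <=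
   \sum_(1 <= k < (m + m).+1) (m %/ p ^ k + m %/ p ^ k + (p ^ k <= m + m)))%N.
  apply: leq_sum => k _; apply: div_double_le; rewrite expn_gt0; lia.
rewrite big_split big_split /= in hb.
suff hs : (\sum_(1 <= k < (m + m).+1) (p ^ k <= m + m) <= T)%N by lia.
have hTm : (T < m + m)%N by apply: leq_trans (ltn_expl T hp1) hT.
rewrite (big_cat_nat _ (n := T.+1)) //=; last by lia.
rewrite [X in (_ + X)%N]big_nat_cond [X in (_ + X)%N]big1 ?addn0; last first.
  move=> k /andP[] /andP[hk1 hk2] _.
  have := trunc_log_ltn (m + m) hp1.
  have : (p ^ T.+1 <= p ^ k)%N by apply: leq_pexp2l; lia.
  rewrite -/T => h1 h2. case: leqP => // h3. lia.
have : (\sum_(1 <= k < T.+1) (p ^ k <= m + m) <= \sum_(1 <= k < T.+1) 1)%N.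
  by apply: leq_sum => k _; exact: leq_b1.
by rewrite sum_nat_const_nat; lia.
Qed.

Definition piN (N : nat) : nat := \sum_(0 <= p < N | prime p) 1.

Lemma prod_const_pow (I : Type) (r : seq I) (P : pred I) (c : nat) :
  \prod_(i <- r | P i) c = c ^ (\sum_(i <- r | P i) 1).
Proof.
elim: r => [|x r IH]; first by rewrite !big_nil.
rewrite !big_cons; case: (P x) => //.
by rewrite IH add1n expnS.
Qed.

Lemma bin_double_le m : (0 < m)%N -> ('C(m + m, m) <= (m + m) ^ piN (m + m).+1)%N.
Proof.
move=> hm.
set C := 'C(m + m, m).
have hC : (0 < C)%N by rewrite bin_gt0; lia.
rewrite {1}(@factor_prod C (C + (m + m).+1)) //; last by lia.
rewrite /piN -prod_const_pow.
rewrite (@big_restrict _ _ _ 0 (m + m).+1 (C + (m + m).+1)) //; last by lia.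
apply: leq_prod => p hp.
have hle := @logn_bin_le p m hp hm.
case: (posnP (logn p C)) => hl.
- rewrite hl expn0; case: ifP => //; lia.
- have : (p <= p ^ logn p C)%N.
    by rewrite -{1}(expn1 p); apply: leq_pexp2l => //; have := prime_gt1 hp; lia.
  rewrite -/C in hle.
  move=> h; case: ifP => //; lia.
Qed.

Lemma bin_odd_le m : ('C((m + m).+1, m) <= 4 ^ m)%N.
Proof.
have h : ((1 + 1) ^ (m + m).+1 = \sum_(0 <= i < (m + m).+2) 'C((m + m).+1, i) * (1 ^ ((m + m).+1 - i) * 1 ^ i))%N.
  by rewrite big_mkord expnDn.
rewrite (big_cat_nat _ (n := m)) //= in h; last by lia.
rewrite (@big_ltn _ _ _ m) in h; last by lia.
rewrite (@big_ltn _ _ _ m.+1) in h; last by lia.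
rewrite !exp1n !muln1 in h. change (1+1)%N with 2%N in h.
have hs : 'C((m + m).+1, m.+1) = 'C((m + m).+1, m).
  have -> : m.+1 = ((m + m).+1 - m)%N by lia.
  by rewrite bin_sub //; lia.
rewrite hs in h.
have -> : (4 ^ m = 2 ^ (m + m))%N by rewrite expnD -expnMn.
have : (2 ^ (m + m).+1 = 2 * 2 ^ (m + m))%N by rewrite expnS.
lia.
Qed.

Lemma sum_fact_small p K : prime p -> (K < p)%N -> logn p K`! = 0%N.
Proof.
move=> hp hK; rewrite logn_fact // big_nat_cond big1 // => k /andP[] /andP[hk1 hk2] _.
apply: divn_small; apply: (leq_trans hK).
by rewrite -{1}(expn1 p); apply: leq_pexp2l => //; have := prime_gt1 hp; lia.
Qed.

Lemma mid_primes_le m :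
  (\prod_(m.+2 <= p < (m + m).+2 | prime p) p <= 'C((m + m).+1, m))%N.
Proof.
set C := 'C((m + m).+1, m).
have hC : (0 < C)%N by rewrite bin_gt0; lia.
rewrite [X in (_ <= X)%N](@factor_prod C (C + (m + m).+2)) //; last by lia.
rewrite (@big_restrict _ _ _ m.+2 (m + m).+2 (C + (m + m).+2)) //; last by lia.
apply: leq_prod => p hp.
case: ifP => hr; last by rewrite expn_gt0; have := prime_gt1 hp; lia.
have hl : (0 < logn p C)%N.
  have hf := bin_fact (leqW (leq_addr m m) : (m <= (m + m).+1)%N).
  rewrite (_ : ((m + m).+1 - m = m.+1)%N) in hf; last by lia.
  have hfm : (0 < m`! * m.+1`!)%N by rewrite muln_gt0 !fact_gt0.
  have e : logn p ((m + m).+1)`! = (logn p C + (logn p m`! + logn p m.+1`!))%N.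
    by rewrite -hf lognM // lognM ?fact_gt0.
  rewrite (@sum_fact_small p m) // ?(@sum_fact_small p m.+1) // in e; try lia.
  rewrite !addn0 in e; rewrite -e logn_gt0 mem_primes hp fact_gt0 /=.
  apply: dvdn_fact; have := prime_gt1 hp; lia.
by rewrite -{1}(expn1 p); apply: leq_pexp2l => //; have := prime_gt1 hp; lia.
all: lia.
Qed.

Definition prim (N : nat) : nat := \prod_(0 <= p < N | prime p) p.

Lemma prim_rec k : prim k.+1 = (prim k * (if prime k then k else 1))%N.
Proof. by rewrite /prim big_mkcond big_nat_recr //= -big_mkcond. Qed.

Lemma prim_split a b : (a <= b)%N ->
  prim b = (prim a * \prod_(a <= p < b | prime p) p)%N.
Proof. by move=> h; rewrite /prim (big_cat_nat _ (n := a)). Qed.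

Lemma prim_le N : (prim N <= 4 ^ N)%N.
Proof.
elim/ltn_ind: N => N IH.
case: N IH => [|k] IH; first by rewrite /prim big_geq.
rewrite prim_rec.
have IHk := IH k (ltnSn k).
case: ifP => hk; last first.
  rewrite muln1 expnS; lia.
case: (leqP k 4) => hk4.
  rewrite expnS.
  have : (prim k * k <= prim k * 4)%N by apply: leq_mul.
  lia.
have hodd : odd k by case: (even_prime hk) => [e|//]; lia.
set m := k./2.
have hkm : k = (m + m).+1 by rewrite /m; lia.
have -> : (prim k * k = prim (m + m).+2)%N by rewrite prim_rec -hkm hk.
rewrite (@prim_split m.+2) ; last by lia.
have h1 := IH m.+2 ltac:(lia).
have h2 := mid_primes_le m.
have h3 := bin_odd_le m.
have : (4 ^ k.+1 = 4 ^ m.+2 * 4 ^ m)%N by rewrite -expnD; congr (_ ^ _); lia.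
move=> ->; apply: leq_mul => //; exact: leq_trans h2 h3.
Qed.

Open Scope R_scope.


Lemma Rplus_assoc' : associative Rplus.
Proof. move=> x y z; rewrite Rplus_assoc; reflexivity. Qed.
Lemma Rplus_comm' : commutative Rplus.
Proof. move=> x y; exact: Rplus_comm. Qed.
Lemma Rplus_0_l' : left_id R0 Rplus.
Proof. move=> x; exact: Rplus_0_l. Qed.
HB.instance Definition _ := Monoid.isComLaw.Build R R0 Rplus Rplus_assoc' Rplus_comm' Rplus_0_l'.

Lemma rsum_le (I : Type) (r : seq I) (P : pred I) (F G : I -> R) :
  (forall i, P i -> F i <= G i) ->
  \big[Rplus/R0]_(i <- r | P i) F i <= \big[Rplus/R0]_(i <- r | P i) G i.
Proof.
move=> H; apply: (big_ind2 (fun a b => a <= b)) => //.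
- lra.
- move=> ? ? ? ? ? ?; lra.
Qed.

Lemma rsum_ge0 (I : Type) (r : seq I) (P : pred I) (F : I -> R) :
  (forall i, P i -> 0 <= F i) -> 0 <= \big[Rplus/R0]_(i <- r | P i) F i.
Proof.
move=> H; apply: (big_ind (fun a => 0 <= a)) => //.
- lra.
- move=> ? ? ? ?; lra.
Qed.

Lemma INR_sum (I : Type) (r : seq I) (P : pred I) (F : I -> nat) :
  INR (\sum_(i <- r | P i) F i) = \big[Rplus/R0]_(i <- r | P i) INR (F i).
Proof.
apply: (big_morph INR) => //.
move=> x y; exact: plus_INR.
Qed.

Lemma rsum_const (I : Type) (r : seq I) (P : pred I) (c : R) :
  \big[Rplus/R0]_(i <- r | P i) c = INR (\sum_(i <- r | P i) 1%N) * c.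
Proof.
elim: r => [|x r IH]; first by rewrite !big_nil /=; lra.
rewrite !big_cons; case: (P x) => //.
rewrite IH plus_INR /=; lra.
Qed.

Lemma rsum_scale (I : Type) (r : seq I) (P : pred I) (c : R) (F : I -> R) :
  \big[Rplus/R0]_(i <- r | P i) (c * F i) = c * \big[Rplus/R0]_(i <- r | P i) F i.
Proof.
elim: r => [|x r IH]; first by rewrite !big_nil /=; lra.
rewrite !big_cons; case: (P x) => //.
rewrite IH; lra.
Qed.

Lemma rsum_sub (I : Type) (r : seq I) (P : pred I) (F G : I -> R) :
  \big[Rplus/R0]_(i <- r | P i) (F i - G i) =
  \big[Rplus/R0]_(i <- r | P i) F i - \big[Rplus/R0]_(i <- r | P i) G i.
Proof.
elim: r => [|x r IH]; first by rewrite !big_nil /=; lra.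
rewrite !big_cons; case: (P x) => //.
rewrite IH; lra.
Qed.

Lemma ln_prod (I : Type) (r : seq I) (P : pred I) (F : I -> nat) :
  (forall i, P i -> (0 < F i)%N) ->
  ln (INR (\prod_(i <- r | P i) F i)) = \big[Rplus/R0]_(i <- r | P i) ln (INR (F i)).
Proof.
move=> H.
suff [] : (0 < \prod_(i <- r | P i) F i)%N /\ ln (INR (\prod_(i <- r | P i) F i)) = \big[Rplus/R0]_(i <- r | P i) ln (INR (F i)) by [].
apply: (big_ind2 (fun a b => (0 < a)%N /\ ln (INR a) = b)).
- by split => //=; rewrite ln_1.
- move=> a1 b1 a2 b2 [h1 e1] [h2 e2]; split; first by rewrite muln_gt0 h1 h2.
  rewrite -e1 -e2 mult_INR ln_mult //; apply: lt_0_INR; apply/ltP => //.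
- move=> i Pi; split; [exact: H|done].
Qed.

Lemma ln_le_sub1 x : 0 < x -> ln x <= x - 1.
Proof.
move=> hx. have := exp_ineq1_le (ln x). rewrite exp_ln //. lra.
Qed.

Lemma ln_2_le1 : ln 2 <= 1.
Proof. have := ln_le_sub1 2; lra. Qed.

Lemma ln_3_ge1 : 1 <= ln 3.
Proof.
have h := exp_le_3. rewrite -(ln_exp 1).
destruct (Rle_lt_or_eq_dec _ _ h) as [h'|h'].
- left; apply: ln_increasing => //; apply: exp_pos.
- by rewrite h'; right.
Qed.


Lemma INR_leq {m n} : (m <= n)%N -> INR m <= INR n.
Proof. move/leP; exact: le_INR. Qed.

Lemma INR_ltn {m n} : (m < n)%N -> INR m < INR n.
Proof. move/ltP; exact: lt_INR. Qed.

Lemma INR_gt0 {n} : (0 < n)%N -> 0 < INR n.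
Proof. move=> h; have := INR_ltn h; rewrite /=; lra. Qed.

Lemma INR_expn a n : INR (a ^ n)%N = INR a ^ n.
Proof.
elim: n => [|n IH]; first by rewrite expn0.
by rewrite expnS mult_INR IH /=.
Qed.

Lemma INR_muln a b : INR (a * b)%N = INR a * INR b.
Proof. exact: mult_INR. Qed.

Lemma INR_addn a b : INR (a + b)%N = INR a + INR b.
Proof. exact: plus_INR. Qed.

Lemma ln_le {x y} : 0 < x -> x <= y -> ln x <= ln y.
Proof.
move=> hx hxy; case: (Rle_lt_or_eq_dec _ _ hxy) => h.
- left; exact: ln_increasing.
- rewrite h; right; reflexivity.
Qed.

Lemma ln_ge0 x : 1 <= x -> 0 <= ln x.
Proof. move=> h; rewrite -ln_1; apply: ln_le => //; lra. Qed.

Lemma ln_INR_ge0 n : 0 <= ln (INR n).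
Proof.
case: n => [|n]. rewrite /= /ln. case: Rlt_dec => h. by case: (Rlt_irrefl _ h). lra.
apply: ln_ge0; have := INR_leq (ltn0Sn n); rewrite /=; lra.
Qed.

Lemma ln_2_ge : / 2 <= ln 2.
Proof. left; exact: ln_lt_2. Qed.

Definition r8 (x : R) := sqrt (sqrt (sqrt x)).

Lemma r8_spec {x} : 1 <= x ->
  1 <= r8 x /\ r8 x ^ 8 = x /\ sqrt x = r8 x ^ 4 /\ ln x <= 8 * r8 x.
Proof.
move=> hx.
have h1 : 1 <= sqrt x by rewrite -sqrt_1; apply: sqrt_le_1_alt.
have h2 : 1 <= sqrt (sqrt x) by rewrite -sqrt_1; apply: sqrt_le_1_alt.
have h3 : 1 <= r8 x by rewrite /r8 -sqrt_1; apply: sqrt_le_1_alt.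
have e1 := sqrt_sqrt x ltac:(lra).
have e2 := sqrt_sqrt (sqrt x) ltac:(lra).
have e3 := sqrt_sqrt (sqrt (sqrt x)) ltac:(lra).
rewrite /r8 in h3 *.
set a := sqrt (sqrt (sqrt x)) in h3 e3 *.
have ex : x = a ^ 8 by rewrite -e1 -e2 -e3; ring.
have es : sqrt x = a ^ 4 by rewrite -e2 -e3; ring.
split => //; split => //; split => //.
rewrite ex ln_pow; last lra.
have := ln_le_sub1 a ltac:(lra).
rewrite /=; lra.
Qed.

Lemma pi_le N : (piN N <= N)%N.
Proof.
rewrite /piN big_mkcond /=.
apply: leq_trans (_ : (\sum_(0 <= p < N) 1 <= N)%N).
  by apply: leq_sum => p _; case: ifP.
by rewrite sum_nat_const_nat; lia.
Qed.

Lemma pi_mono M N : (M <= N)%N -> (piN M <= piN N)%N.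
Proof. by move=> h; rewrite /piN (big_cat_nat _ (n := M) (p := N)) //=; lia. Qed.

Lemma prim_gt0 N : (0 < prim N)%N.
Proof.
rewrite /prim; apply: (big_ind (fun x => 0 < x)%N) => //.
- by move=> x y hx hy; rewrite muln_gt0 hx hy.
- by move=> p hp; exact: prime_gt0.
Qed.

Lemma theta_le N :
  \big[Rplus/R0]_(0 <= p < N | prime p) ln (INR p) <= 2 * INR N.
Proof.
rewrite -ln_prod; last by move=> p hp; exact: prime_gt0.
have hp := prim_le N.
rewrite -/(prim N).
have h0 : 0 < INR (prim N) by apply: INR_gt0; exact: prim_gt0.
apply: Rle_trans (_ : ln (INR (4 ^ N)) <= _).
  by apply: ln_le => //; apply: INR_leq.
rewrite INR_expn ln_pow; last by rewrite /=; lra.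
have -> : INR 4 = 2 * 2 by rewrite /=; ring.
rewrite ln_mult; try lra.
have := ln_2_le1; have := pos_INR N; nra.
Qed.

Lemma rsum_primes_const a b c :
  \big[Rplus/R0]_(a <= p < b | prime p) c = INR (\sum_(a <= p < b | prime p) 1) * c.
Proof. exact: rsum_const. Qed.

Lemma ln_small {N} : (N <= 1)%N -> ln (INR N) <= 0.
Proof.
case: N => [|[|]] // _.
- rewrite /= /ln; case: Rlt_dec => h; [by case: (Rlt_irrefl _ h)|lra].
- rewrite /= ln_1; lra.
Qed.

Lemma sqrt_facts {N} : (2 <= N)%N ->
  let s := Nat.sqrt N in
  (1 <= s)%N /\ (s.+1 <= N)%N /\ (N < s.+1 * s.+1)%N /\ INR s <= sqrt (INR N).
Proof.
move=> hN s.
have [h1 h2] := Nat.sqrt_spec N (Nat.le_0_l N).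
rewrite -/s in h1 h2.
have hs1 : (1 <= s)%N.
  case: (posnP s) => hs; last by [].
  by rewrite hs in h2; lia.
split => //; split; first by nia.
split; first by lia.
have hsN : (s * s <= N)%N by lia.
rewrite -(sqrt_square (INR s)); last exact: pos_INR.
apply: sqrt_le_1_alt; rewrite -INR_muln; exact: INR_leq.
Qed.

Lemma pi_upper N : INR (piN N) * ln (INR N) <= 20 * INR N.
Proof.
case: (leqP N 1) => hN.
  have := ln_small hN; have := pos_INR (piN N); have := pos_INR N; nra.
have [hs1 [htN [hNt hsq]]] := sqrt_facts hN.
set s := Nat.sqrt N in hs1 htN hNt hsq.
have hN1 : 1 <= INR N by have := INR_leq (ltnW hN); rewrite /=; lra.
have [hy1 [hy8 [hy4 hyl]]] := r8_spec hN1.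
set y := r8 (INR N) in hy1 hy8 hy4 hyl.
have hlN : 0 <= ln (INR N) := ln_INR_ge0 N.
rewrite /piN -rsum_primes_const.
rewrite (big_cat_nat _ (n := s.+1)) //=.
have e1 : \big[Rplus/R0]_(0 <= p < s.+1 | prime p) ln (INR N) <= INR s.+1 * ln (INR N).
  rewrite rsum_primes_const; apply: Rmult_le_compat_r => //.
  exact: INR_leq (pi_le s.+1).
have e2 : \big[Rplus/R0]_(s.+1 <= p < N | prime p) ln (INR N) <=
          \big[Rplus/R0]_(s.+1 <= p < N | prime p) (2 * ln (INR p)).
  rewrite big_nat_cond [X in _ <= X]big_nat_cond; apply: rsum_le => p /andP[] /andP[hp1 hp2] hp.
  have hpp : (N < p * p)%N by nia.
  have hp0 : 0 < INR p by apply: INR_gt0; lia.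
  apply: Rle_trans (_ : ln (INR (p * p)) <= _).
    apply: ln_le; [apply: INR_gt0; lia | apply: INR_leq; lia].
  rewrite INR_muln ln_mult //; lra.
have e3 : \big[Rplus/R0]_(s.+1 <= p < N | prime p) (2 * ln (INR p)) <=
          \big[Rplus/R0]_(0 <= p < N | prime p) (2 * ln (INR p)).
  rewrite [X in _ <= X](big_cat_nat _ (n := s.+1)) //=.
  have : 0 <= \big[Rplus/R0]_(0 <= p < s.+1 | prime p) (2 * ln (INR p)).
    apply: rsum_ge0 => p _; have := ln_INR_ge0 p; lra.
  lra.
have e4 := theta_le N.
rewrite !rsum_scale in e3. rewrite rsum_scale in e2.
have e5 : INR s.+1 * ln (INR N) <= 16 * INR N.
  rewrite S_INR.
  have hy41 : 1 <= y ^ 4 by have := pow_R1_Rle y 4 hy1; lra.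
  have h : INR s + 1 <= 2 * y ^ 4 by lra.
  have h0 : 0 <= INR s + 1 by have := pos_INR s; lra.
  apply: Rle_trans (_ : (2 * y ^ 4) * (8 * y) <= _).
    by apply: Rmult_le_compat.
  rewrite -hy8.
  have : y ^ 5 <= y ^ 8 by apply: Rle_pow; [lra|lia].
  have : y ^ 5 = y ^ 4 * y by ring.
  nra.
lra.
Qed.

Lemma pi_lower {P} : (3 <= P)%N -> (INR P - 2) / 4 <= INR (piN P) * ln (INR P).
Proof.
move=> hP.
set m := P.-1./2.
have hm1 : (1 <= m)%N by rewrite /m; lia.
have hm2 : ((m + m).+1 <= P)%N by rewrite /m; lia.
have hm3 : (P <= (m + m).+2)%N by rewrite /m; lia.
have hb := leq_trans (bin_double_ge m) (@bin_double_le m hm1).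
set k := piN (m + m).+1 in hb.
have hmm : 0 < INR (m + m) by apply: INR_gt0; lia.
have hl : INR m * ln 2 <= INR k * ln (INR (m + m)).
  have h0 : 0 < INR (2 ^ m) by rewrite INR_expn; apply: pow_lt; rewrite /=; lra.
  have := ln_le h0 (INR_leq hb).
  by rewrite !INR_expn !ln_pow //; rewrite /=; lra.
have hk : INR k <= INR (piN P) by apply: INR_leq; apply: pi_mono.
have hlm : ln (INR (m + m)) <= ln (INR P) by apply: ln_le => //; apply: INR_leq; lia.
have hl0 : 0 <= ln (INR (m + m)) := ln_INR_ge0 _.
have hk0 : 0 <= INR k := pos_INR _.
have h2 := ln_2_ge.
have hPm : INR P <= 2 * INR m + 2.
  have := INR_leq hm3; rewrite !S_INR INR_addn; lra.
have : INR k * ln (INR (m + m)) <= INR (piN P) * ln (INR P).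
  apply: Rmult_le_compat => //.
have := pos_INR m.
nra.
Qed.

Definition D (N : nat) : R :=
  \big[Rplus/R0]_(0 <= p < N | prime p) (ln (INR N) - ln (INR p)).

Lemma D_ge0 N : 0 <= D N.
Proof.
rewrite /D big_nat_cond; apply: rsum_ge0 => p /andP[] /andP[_ hp] pp.
have : ln (INR p) <= ln (INR N).
  apply: ln_le; [apply: INR_gt0; exact: prime_gt0 | apply: INR_leq; lia].
lra.
Qed.

Lemma D_le_pi N : D N <= INR (piN N) * ln (INR N).
Proof.
rewrite /D /piN -rsum_primes_const; apply: rsum_le => p _.
have := ln_INR_ge0 p; lra.
Qed.

Lemma D_rec {N} : (1 <= N)%N -> D N <= INR (piN N) * ln 2 + D N.+1./2.
Proof.
move=> hN.
set M := N.+1./2.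
have hM1 : (1 <= M)%N by rewrite /M; lia.
have hMN : (M <= N)%N by rewrite /M; lia.
have hNM : (N <= M + M)%N by rewrite /M; lia.
have hMpos : 0 < INR M by apply: INR_gt0.
have hl : ln (INR N) <= ln 2 + ln (INR M).
  rewrite -ln_mult //; last lra.
  apply: ln_le; first by apply: INR_gt0; lia.
  have := INR_leq hNM; rewrite INR_addn; lra.
rewrite /D /piN -rsum_primes_const.
rewrite (big_cat_nat _ (n := M) (m := 0) (p := N)) //=.
rewrite [X in _ <= X + _](big_cat_nat _ (n := M) (m := 0) (p := N)) //=.
have e1 : \big[Rplus/R0]_(0 <= p < M | prime p) (ln (INR N) - ln (INR p)) <=
          \big[Rplus/R0]_(0 <= p < M | prime p) (ln 2 + (ln (INR M) - ln (INR p))).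
  apply: rsum_le => p _; lra.
rewrite [X in _ <= X]big_split /= in e1.
have e2 : \big[Rplus/R0]_(M <= p < N | prime p) (ln (INR N) - ln (INR p)) <=
          \big[Rplus/R0]_(M <= p < N | prime p) ln 2.
  rewrite big_nat_cond [X in _ <= X]big_nat_cond.
  apply: rsum_le => p /andP[] /andP[hp1 hp2] _.
  have : ln (INR M) <= ln (INR p) by apply: ln_le => //; apply: INR_leq.
  lra.
lra.
Qed.

Lemma D_bound N : D N * ln (INR N) <= 200 * INR N.
Proof.
elim/ltn_ind: N => N IH.
case: (leqP N 1) => hN.
  have := ln_small hN; have := D_ge0 N; have := pos_INR N; nra.
set M := N.+1./2.
have hM1 : (1 <= M)%N by rewrite /M; lia.
have hMN : (M < N)%N by rewrite /M; lia.
have hNM : (N <= M + M)%N by rewrite /M; lia.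
have hMpos : 0 < INR M by apply: INR_gt0.
have hl : ln (INR N) <= ln 2 + ln (INR M).
  rewrite -ln_mult //; last lra.
  apply: ln_le; first by apply: INR_gt0; lia.
  have := INR_leq hNM; rewrite INR_addn; lra.
have hIH := IH M hMN.
have hrec := D_rec (ltnW hN).
rewrite -/M in hrec.
have hpiN := pi_upper N.
have hpiM := pi_upper M.
have hDM := D_le_pi M.
have hDM0 := D_ge0 M.
have hlN0 := ln_INR_ge0 N.
have hl2 := ln_2_le1.
have hl20 : 0 <= ln 2 by have := ln_2_ge; lra.
have hpi0 := pos_INR (piN N).
have hNM' : INR N <= 2 * INR M by have := INR_leq hNM; rewrite INR_addn; lra.
have hN2 : 2 <= INR N by have := INR_leq hN; rewrite /=; lra.
have hM' : 2 * INR M <= INR N + 1.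
  have : (M + M <= N.+1)%N by rewrite /M; lia.
  move/INR_leq; rewrite INR_addn S_INR; lra.
have s1 : D N * ln (INR N) <= (INR (piN N) * ln 2 + D M) * ln (INR N).
  by apply: Rmult_le_compat_r.
have s2 : D M * ln (INR N) <= D M * ln (INR M) + D M * ln 2.
  have := Rmult_le_compat_l _ _ _ hDM0 hl; lra.
have s3 : D M * ln 2 <= 20 * INR M.
  have : D M <= 20 * INR M by have := Rle_trans _ _ _ hDM hpiM; lra.
  move=> h; have := Rmult_le_compat_r _ _ _ hl20 h; nra.
have s4 : INR (piN N) * ln 2 * ln (INR N) <= 20 * INR N.
  have := Rmult_le_compat_l _ _ _ (Rmult_le_pos _ _ hpi0 hlN0) hl2.
  move=> h; nra.
nra.
Qed.


Lemma exists_P {n} : (0 < n)%N -> exists P,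
  [/\ prime P, odd P, ~~ (P %| n) &
      forall q, prime q -> odd q -> (q < P)%N -> q %| n].
Proof.
move=> hn.
pose Q := fun p => [&& prime p, odd p & ~~ (p %| n)].
have exQ : exists p, Q p.
  exists (pdiv (n + n).+1).
  have h1 : (1 < (n + n).+1)%N by lia.
  have hp := pdiv_prime h1.
  have hd := pdiv_dvd (n + n).+1.
  apply/and3P; split => //.
  - case: (even_prime hp) => // e.
    by rewrite e in hd; move: hd; rewrite dvdn2 /=; lia.
  - apply/negP => hdn.
    move: hp hd hdn; set d := pdiv (n + n).+1 => hp hd hdn.
    have : d %| 1.
      have hnn : d %| n + n by apply: dvdn_add.
      by rewrite -addn1 (dvdn_addr _ hnn) in hd.
    rewrite dvdn1 => /eqP e; by rewrite e in hp.
case: (ex_minnP exQ) => P /and3P[hP1 hP2 hP3] hmin.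
exists P; split => // q hq hqo hqP.
apply/negPn/negP => hnq.
have : (P <= q)%N by apply: hmin; apply/and3P; split.
lia.
Qed.

Lemma lt_div_mul {a b c} : 0 < c -> a < b / c -> a * c < b.
Proof.
move=> hc h.
have := Rmult_lt_compat_r c _ _ hc h.
rewrite /Rdiv Rmult_assoc Rinv_l; lra.
Qed.

Lemma ln_prime_pos {p} : prime p -> 0 < ln (INR p).
Proof.
move=> hp; rewrite -ln_1; apply: ln_increasing; first lra.
have := INR_ltn (prime_gt1 hp); rewrite /=; lra.
Qed.

Lemma prime_odd_ge3 {P} : prime P -> odd P -> (3 <= P)%N.
Proof. move=> hP hO; have := prime_gt1 hP; case: P hP hO => [|[|[|]]] //. Qed.

Lemma red_zero {n P} : reduced n -> prime P -> odd P -> ~~ (P %| n) ->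
  forall p, prime p -> (P <= p)%N -> logn p n = 0%N.
Proof.
move=> [hn [hred _]] hP hO hPn p hp hpP.
have hP0 : logn P n = 0%N.
  apply/eqP; rewrite -leqn0 leqNgt logn_gt0 mem_primes hP hn /=; exact: hPn.
have hP3 := prime_odd_ge3 hP hO.
case: (ltnP P p) => hlt; last by have -> : p = P by lia.
have hp2 : p <> 2%N by lia.
have hP2 : P <> 2%N by lia.
have h := hred p P hp hP hp2 hP2.
rewrite hP0 in h.
have hlp := ln_prime_pos hp.
have hlP := ln_prime_pos hP.
have hlt' : ln (INR P) < ln (INR p) by apply: ln_increasing; [exact: (INR_gt0 (prime_gt0 hP))|apply: INR_ltn].
have := lt_div_mul hlp h.
case: (posnP ((logn p n).+1 %/ 2)) => hd.
- move=> _; lia.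
- move=> h2; have := INR_leq hd; rewrite /= => h3.
  have : 1 * ln (INR p) <= INR ((logn p n).+1 %/ 2) * ln (INR p) by apply: Rmult_le_compat_r; lra.
  lra.
Qed.

Lemma red_odd {n P} : reduced n -> prime P -> odd P -> ~~ (P %| n) ->
  forall p, prime p -> p <> 2%N -> (p < P)%N ->
  INR (logn p n) * ln (INR p) < 2 * ln (INR P) /\
  ((P < p * p)%N -> (logn p n <= 2)%N).
Proof.
move=> [hn [hred _]] hP hO hPn p hp hp2 hpP.
have hP0 : logn P n = 0%N.
  apply/eqP; rewrite -leqn0 leqNgt logn_gt0 mem_primes hP hn /=; exact: hPn.
have hP3 := prime_odd_ge3 hP hO.
have hP2 : P <> 2%N by lia.
have h := hred p P hp hP hp2 hP2.
rewrite hP0 in h.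
have hlp := ln_prime_pos hp.
have hlP := ln_prime_pos hP.
have h1 := lt_div_mul hlp h.
set a := logn p n in h1 *.
set d := (a.+1 %/ 2)%N in h1.
have had : (a <= d + d)%N by rewrite /d; lia.
split.
- have := INR_leq had; rewrite INR_addn => h2.
  have : INR a * ln (INR p) <= (INR d + INR d) * ln (INR p) by apply: Rmult_le_compat_r; lra.
  lra.
- move=> hpp; case: (leqP a 2) => // ha3.
  have hd2 : (2 <= d)%N by rewrite /d; lia.
  have := INR_leq hd2; rewrite /= => h3.
  have : 2 * ln (INR p) < ln (INR P).
    have : 2 * ln (INR p) <= INR d * ln (INR p) by apply: Rmult_le_compat_r; lra.
    lra.
  have hp0 : 0 < INR p by apply: INR_gt0; exact: prime_gt0.
  move=> h4; exfalso.
  have : ln (INR P) < ln (INR (p * p)).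
    apply: ln_increasing; [exact: (INR_gt0 (prime_gt0 hP))|exact: INR_ltn].
  rewrite INR_muln ln_mult //; lra.
Qed.

Lemma red_two {n P} : reduced n -> prime P -> odd P -> ~~ (P %| n) ->
  INR (logn 2 n) * ln 2 < 3 * ln 2 + 2 * ln (INR P).
Proof.
move=> [hn [_ h2]] hP hO hPn.
have hP0 : logn P n = 0%N.
  apply/eqP; rewrite -leqn0 leqNgt logn_gt0 mem_primes hP hn /=; exact: hPn.
have h := h2 P hP hP0.
have hP0' : 0 < INR P := INR_gt0 (prime_gt0 hP).
have h0 : 0 < INR (2 ^ logn 2 n) by rewrite INR_expn; apply: pow_lt; rewrite /=; lra.
have := ln_increasing _ _ h0 h.
have i2 : INR 2 = 2 by simpl; ring.
have e1 : ln (INR (2 ^ logn 2 n)) = INR (logn 2 n) * ln 2.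
  by rewrite INR_expn ln_pow i2 //; lra.
have e2 : ln (8 * INR P ^ 2) = 3 * ln 2 + 2 * ln (INR P).
  rewrite ln_mult; [|lra|apply: pow_lt; lra].
  rewrite ln_pow //.
  have -> : 8 = 2 ^ 3 by simpl; ring.
  rewrite ln_pow; last lra.
  have -> : INR 3 = 3 by simpl; ring.
  have -> : INR 2 = 2 by simpl; ring.
  reflexivity.
rewrite e1 e2; lra.
Qed.

Lemma red_bounds {n P} : reduced n -> prime P -> odd P -> ~~ (P %| n) ->
  (forall q, prime q -> odd q -> (q < P)%N -> q %| n) ->
  forall p, prime p -> (p < P)%N ->
  [/\ INR (logn p n) * ln (INR p) <= 3 + 2 * ln (INR P),
      INR (logn p n) <= 6 + 4 * ln (INR P),
      (p <> 2%N -> (1 <= logn p n)%N) &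
      (p <> 2%N -> (P < p * p)%N -> (logn p n <= 2)%N)].
Proof.
move=> hr hP hO hPn hdiv p hp hpP.
have hlP : 0 <= ln (INR P) := ln_INR_ge0 P.
have hl2 := ln_2_le1.
have hl2' := ln_2_ge.
have ha0 := pos_INR (logn p n).
case: (eqVneq p 2%N) => [ep|hp2].
- rewrite ep.
  have h := red_two hr hP hO hPn.
  have i2 : INR 2 = 2 by simpl; ring.
  rewrite i2.
  split; [lra| nra | by [] | by []].
- have hp2' : p <> 2%N by apply/eqP.
  have [h1 h2] := red_odd hr hP hO hPn p hp hp2' hpP.
  have hp3 : (3 <= p)%N by have := prime_gt1 hp; lia.
  have hl3 : 1 <= ln (INR p).
    apply: Rle_trans ln_3_ge1 _; apply: ln_le; first lra.
    have := INR_leq hp3; rewrite /=; lra.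
  split => //; try lra.
  + nra.
  + move=> _; rewrite logn_gt0 mem_primes hp (proj1 hr) /=.
    apply: hdiv => //; case: (even_prime hp) => //.
Qed.

Lemma decomp_ln {n P} : reduced n -> prime P -> odd P -> ~~ (P %| n) ->
  ln (INR n) = \big[Rplus/R0]_(0 <= p < P | prime p) (INR (logn p n) * ln (INR p)).
Proof.
move=> hr hP hO hPn.
have hn := proj1 hr.
have hz := red_zero hr hP hO hPn.
rewrite {1}(@factor_prod n (n + P).+1) //; last by lia.
rewrite (big_cat_nat _ (n := P)) //=; last by lia.
rewrite [X in (_ * X)%N]big_nat_cond [X in (_ * X)%N]big1 ?muln1; last first.
  by move=> p /andP[] /andP[h1 _] hp; rewrite hz.
rewrite ln_prod; last by move=> p hp; rewrite expn_gt0 prime_gt0.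
apply: eq_bigr => p hp.
rewrite INR_expn ln_pow //; exact: (INR_gt0 (prime_gt0 hp)).
Qed.

Lemma decomp_Omega {n P} : reduced n -> prime P -> odd P -> ~~ (P %| n) ->
  INR (Omega n) = \big[Rplus/R0]_(0 <= p < P | prime p) INR (logn p n).
Proof.
move=> hr hP hO hPn.
have hn := proj1 hr.
have hz := red_zero hr hP hO hPn.
set M := (n + P).+1.
have e : Omega n = (\sum_(0 <= p < M | prime p) logn p n)%N.
  rewrite /Omega.
  rewrite (perm_big [seq p <- index_iota 0 M | p \in primes n]); last first.
    apply: uniq_perm.
    - exact: primes_uniq.
    - by apply: filter_uniq; exact: iota_uniq.
    - move=> x; rewrite mem_filter mem_iota.
      case hx: (x \in primes n) => //=.
      move: hx; rewrite mem_primes => /and3P[_ _ hd].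
      have := dvdn_leq hn hd; rewrite /M; lia.
  rewrite big_filter big_mkcond [RHS]big_mkcond; apply: eq_bigr => p _.
  rewrite -logn_gt0.
  case: (posnP (logn p n)) => [->|hl]; first by case: (prime p).
  suff -> : prime p by [].
  by move: hl; rewrite logn_gt0 mem_primes => /andP[].
rewrite e INR_sum.
rewrite (big_cat_nat _ (n := P)) //=; last by rewrite /M; lia.
rewrite [X in _ + X]big_nat_cond [X in _ + X]big1; first by rewrite Rplus_0_r.
by move=> p /andP[] /andP[h1 _] hp; rewrite hz.
Qed.


Lemma big_setup {P} : (2 ^ 24 <= P)%N -> exists t y,
  [/\ (3 <= t)%N, (t <= P)%N, (P < t * t)%N, 8 <= y &
   [/\ y ^ 8 = INR P, ln (INR P) <= 8 * y & INR t <= 2 * y ^ 4]].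
Proof.
move=> hP.
have hP2 : (2 <= P)%N by have : (2 <= 2 ^ 24)%N by []; lia.
have [hs1 [htN [hNt hsq]]] := sqrt_facts hP2.
set s := Nat.sqrt P in hs1 htN hNt hsq.
have hPr : 2 ^ 24 <= INR P.
  have := INR_leq hP; rewrite INR_expn (_ : INR 2 = 2) //; simpl; ring.
have hN1 : 1 <= INR P by lra.
have [hy1 [hy8 [hy4 hyl]]] := r8_spec hN1.
set y := r8 (INR P) in hy1 hy8 hy4 hyl.
have hy : 8 <= y.
  case: (Rle_lt_dec 8 y) => // hlt; exfalso.
  have h7 : y ^ 7 <= 8 ^ 7 by apply: pow_incr; lra.
  have : y ^ 8 < 8 ^ 8.
    have -> : y ^ 8 = y * y ^ 7 by ring.
    have -> : 8 ^ 8 = 8 * 8 ^ 7 by ring.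
    have : 0 < 8 ^ 7 by apply: pow_lt; lra.
    have : 0 <= y ^ 7 by apply: pow_le; lra.
    nra.
  have : 8 ^ 8 = 2 ^ 24 by ring.
  lra.
exists s.+1, y; split => //.
- have : (3 * 3 <= P)%N by have : (9 <= 2 ^ 24)%N by []; lia.
  move=> h9; case: (leqP 3 s.+1) => // h.
  have : (s.+1 * s.+1 <= 2 * 2)%N by apply: leq_mul; lia.
  lia.
- split => //.
  rewrite S_INR.
  have : 1 <= y ^ 4 by have := pow_R1_Rle y 4 hy1; lra.
  lra.
Qed.

Definition good (P : nat) (a : nat -> nat) :=
  forall p, prime p -> (p < P)%N ->
  [/\ INR (a p) * ln (INR p) <= 3 + 2 * ln (INR P),
      INR (a p) <= 6 + 4 * ln (INR P),
      (p <> 2%N -> (1 <= a p)%N) &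
      (p <> 2%N -> (P < p * p)%N -> (a p <= 2)%N)].

Lemma est_A2 {P a} : good P a ->
  \big[Rplus/R0]_(0 <= p < P | prime p) (INR (a p) * ln (INR p)) <= 43 * INR P.
Proof.
move=> hg.
apply: Rle_trans (_ : \big[Rplus/R0]_(0 <= p < P | prime p) (3 + 2 * ln (INR P)) <= _).
  rewrite big_nat_cond [X in _ <= X]big_nat_cond.
  apply: rsum_le => p /andP[] /andP[_ hp] pp.
  by case: (hg p pp hp).
rewrite rsum_primes_const -/(piN P).
have h1 := pi_upper P.
have h2 := INR_leq (pi_le P).
lra.
Qed.

Lemma est_Om {P a} : good P a ->
  \big[Rplus/R0]_(0 <= p < P | prime p) INR (a p) * ln 2 <=
  \big[Rplus/R0]_(0 <= p < P | prime p) (INR (a p) * ln (INR p)).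
Proof.
move=> hg.
rewrite Rmult_comm -rsum_scale; apply: rsum_le => p pp.
have : ln 2 <= ln (INR p).
  apply: ln_le; first lra.
  have := INR_leq (prime_gt1 pp); rewrite /=; lra.
have := pos_INR (a p); nra.
Qed.

Lemma est_Cpos P a :
  0 <= \big[Rplus/R0]_(0 <= p < P | prime p) INR (a p) * ln (INR P) -
       \big[Rplus/R0]_(0 <= p < P | prime p) (INR (a p) * ln (INR p)).
Proof.
rewrite Rmult_comm -rsum_scale -rsum_sub.
rewrite big_nat_cond; apply: rsum_ge0 => p /andP[] /andP[_ hp] pp.
have : ln (INR p) <= ln (INR P).
  apply: ln_le; [exact: (INR_gt0 (prime_gt0 pp))| apply: INR_leq; lia].
have := pos_INR (a p); nra.
Qed.

Lemma count_split t P : (t <= P)%N ->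
  INR (\sum_(t <= p < P | prime p) 1) = INR (piN P) - INR (piN t).
Proof.
move=> h.
have e : piN P = (piN t + \sum_(t <= p < P | prime p) 1)%N.
  by rewrite /piN (big_cat_nat _ (n := t) (p := P)).
rewrite e INR_addn; ring.
Qed.

Lemma est_A1 {P a} : good P a -> (2 ^ 24 <= P)%N ->
  INR P / 16 <= \big[Rplus/R0]_(0 <= p < P | prime p) (INR (a p) * ln (INR p)).
Proof.
move=> hg hP.
have [t [y [ht3 htP hPt hy [hy8 hyl ht]]]] := big_setup hP.
have hP3 : (3 <= P)%N by have : (3 <= 2 ^ 24)%N by []; lia.
have hlP : 0 <= ln (INR P) := ln_INR_ge0 P.
rewrite (big_cat_nat _ (n := t)) //=.
have e1 : 0 <= \big[Rplus/R0]_(0 <= p < t | prime p) (INR (a p) * ln (INR p)).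
  apply: rsum_ge0 => p _; have := pos_INR (a p); have := ln_INR_ge0 p; nra.
have e2 : \big[Rplus/R0]_(t <= p < P | prime p) (ln (INR P) / 2) <=
          \big[Rplus/R0]_(t <= p < P | prime p) (INR (a p) * ln (INR p)).
  rewrite big_nat_cond [X in _ <= X]big_nat_cond.
  apply: rsum_le => p /andP[] /andP[hp1 hp2] pp.
  have [_ _ h3 _] := hg p pp hp2.
  have ha := INR_leq (h3 ltac:(lia)).
  have hpp : (P < p * p)%N by nia.
  have hp0 : 0 < INR p by apply: INR_gt0; lia.
  have : ln (INR P) <= 2 * ln (INR p).
    apply: Rle_trans (_ : ln (INR (p * p)) <= _).
      apply: ln_le; [apply: INR_gt0; lia | apply: INR_leq; lia].
    rewrite INR_muln ln_mult //; lra.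
  have := ln_INR_ge0 p; rewrite /= in ha; nra.
rewrite rsum_primes_const count_split // in e2.
have hpl := pi_lower hP3.
have hpt := INR_leq (pi_le t).
have htl : INR t * ln (INR P) <= 16 * y ^ 5.
  have ht0 : 0 <= INR t := pos_INR t.
  have h1 : INR t * ln (INR P) <= (2 * y ^ 4) * (8 * y).
    by apply: Rmult_le_compat.
  have h2 : y ^ 5 = y ^ 4 * y by ring.
  lra.
have hptl : INR (piN t) * ln (INR P) <= INR t * ln (INR P) by nra.
have hy3 : 512 <= y ^ 3 by have := pow_incr 8 y 3 ltac:(lra); simpl; lra.
have hy5 : 0 <= y ^ 5 by apply: pow_le; lra.
have hy85 : y ^ 8 = y ^ 5 * y ^ 3 by ring.
have : 512 * y ^ 5 <= y ^ 8 by rewrite hy85; nra.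
have : 1 <= y ^ 5 by apply: pow_R1_Rle; lra.
lra.
Qed.

Lemma small_part {P a t} : good P a -> (t <= P)%N ->
  \big[Rplus/R0]_(0 <= p < t | prime p) (INR (a p) * ln (INR P)) <=
  INR t * ((6 + 4 * ln (INR P)) * ln (INR P)).
Proof.
move=> hg htP.
have hlP : 0 <= ln (INR P) := ln_INR_ge0 P.
apply: Rle_trans (_ : \big[Rplus/R0]_(0 <= p < t | prime p) ((6 + 4 * ln (INR P)) * ln (INR P)) <= _).
  rewrite big_nat_cond [X in _ <= X]big_nat_cond.
  apply: rsum_le => p /andP[] /andP[_ hp] pp.
  have [_ h2 _ _] := hg p pp ltac:(lia).
  by apply: Rmult_le_compat_r.
rewrite rsum_primes_const -/(piN t).
apply: Rmult_le_compat_r; first nra.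
exact: INR_leq (pi_le t).
Qed.

Lemma tbound {t y lP} : 8 <= y -> 0 <= lP -> lP <= 8 * y -> 0 <= INR t -> INR t <= 2 * y ^ 4 ->
  INR t * ((6 + 4 * lP) * lP) <= 608 * y ^ 6 /\
  INR t * ((6 + 4 * lP) * lP) * lP <= 4864 * y ^ 7.
Proof.
move=> hy hl0 hl ht0 ht.
have h1 : (6 + 4 * lP) * lP <= (6 + 32 * y) * (8 * y) by apply: Rmult_le_compat; nra.
have h2 : (6 + 32 * y) * (8 * y) <= 304 * y * y by nra.
have hq0 : 0 <= (6 + 4 * lP) * lP by nra.
have h3 : INR t * ((6 + 4 * lP) * lP) <= (2 * y ^ 4) * (304 * y * y).
  apply: Rmult_le_compat => //; lra.
have e6 : (2 * y ^ 4) * (304 * y * y) = 608 * y ^ 6 by ring.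
split; first lra.
have h4 : INR t * ((6 + 4 * lP) * lP) * lP <= (608 * y ^ 6) * (8 * y).
  apply: Rmult_le_compat => //; [nra|lra].
have e7 : (608 * y ^ 6) * (8 * y) = 4864 * y ^ 7 by ring.
lra.
Qed.

Lemma est_B {P a} : good P a -> (2 ^ 24 <= P)%N ->
  \big[Rplus/R0]_(0 <= p < P | prime p) INR (a p) * ln (INR P) <= 648 * INR P.
Proof.
move=> hg hP.
have [t [y [ht3 htP hPt hy [hy8 hyl ht]]]] := big_setup hP.
have hlP : 0 <= ln (INR P) := ln_INR_ge0 P.
rewrite Rmult_comm -rsum_scale.
rewrite (big_cat_nat _ (n := t)) //=.
have e1 := small_part hg htP.
have e2 : \big[Rplus/R0]_(t <= p < P | prime p) (ln (INR P) * INR (a p)) <=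
          \big[Rplus/R0]_(0 <= p < P | prime p) (2 * ln (INR P)).
  apply: Rle_trans (_ : \big[Rplus/R0]_(t <= p < P | prime p) (2 * ln (INR P)) <= _).
    rewrite big_nat_cond [X in _ <= X]big_nat_cond.
    apply: rsum_le => p /andP[] /andP[hp1 hp2] pp.
    have [_ _ _ h4] := hg p pp hp2.
    have := INR_leq (h4 ltac:(lia) ltac:(nia)); rewrite /= => h5; nra.
  rewrite [X in _ <= X](big_cat_nat _ (n := t)) //=.
  have : 0 <= \big[Rplus/R0]_(0 <= p < t | prime p) (2 * ln (INR P)).
    apply: rsum_ge0 => p _; lra.
  lra.
rewrite rsum_primes_const -/(piN P) in e2.
have hpu := pi_upper P.
have [tb _] := tbound hy hlP hyl (pos_INR t) ht.
have : y ^ 6 <= y ^ 8 by apply: Rle_pow; [lra|lia].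
have : \big[Rplus/R0]_(0 <= p < t | prime p) (ln (INR P) * INR (a p)) =
       \big[Rplus/R0]_(0 <= p < t | prime p) (INR (a p) * ln (INR P)).
  by apply: eq_bigr => p _; ring.
lra.
Qed.

Lemma est_C {P a} : good P a -> (2 ^ 24 <= P)%N ->
  (\big[Rplus/R0]_(0 <= p < P | prime p) INR (a p) * ln (INR P) -
   \big[Rplus/R0]_(0 <= p < P | prime p) (INR (a p) * ln (INR p))) * ln (INR P)
  <= 5264 * INR P.
Proof.
move=> hg hP.
have [t [y [ht3 htP hPt hy [hy8 hyl ht]]]] := big_setup hP.
have hlP : 0 <= ln (INR P) := ln_INR_ge0 P.
have -> : \big[Rplus/R0]_(0 <= p < P | prime p) INR (a p) * ln (INR P) -
   \big[Rplus/R0]_(0 <= p < P | prime p) (INR (a p) * ln (INR p)) =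
   \big[Rplus/R0]_(0 <= p < P | prime p) (INR (a p) * (ln (INR P) - ln (INR p))).
  rewrite Rmult_comm -rsum_scale -rsum_sub; apply: eq_bigr => p _; ring.
rewrite (big_cat_nat _ (n := t)) //=.
have e1 : \big[Rplus/R0]_(0 <= p < t | prime p) (INR (a p) * (ln (INR P) - ln (INR p))) <=
          \big[Rplus/R0]_(0 <= p < t | prime p) (INR (a p) * ln (INR P)).
  apply: rsum_le => p pp; have := pos_INR (a p); have := ln_INR_ge0 p; nra.
have e1' := small_part hg htP.
have e2 : \big[Rplus/R0]_(t <= p < P | prime p) (INR (a p) * (ln (INR P) - ln (INR p))) <=
          2 * D P.
  rewrite /D -rsum_scale.
  apply: Rle_trans (_ : \big[Rplus/R0]_(t <= p < P | prime p) (2 * (ln (INR P) - ln (INR p))) <= _).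
    rewrite big_nat_cond [X in _ <= X]big_nat_cond.
    apply: rsum_le => p /andP[] /andP[hp1 hp2] pp.
    have [_ _ _ h4] := hg p pp hp2.
    have := INR_leq (h4 ltac:(lia) ltac:(nia)); rewrite /= => h5.
    have : ln (INR p) <= ln (INR P).
      apply: ln_le; [apply: INR_gt0; lia | apply: INR_leq; lia].
    have := pos_INR (a p); nra.
  rewrite [X in _ <= X](big_cat_nat _ (n := t)) //=.
  have : 0 <= \big[Rplus/R0]_(0 <= p < t | prime p) (2 * (ln (INR P) - ln (INR p))).
    rewrite big_nat_cond; apply: rsum_ge0 => p /andP[] /andP[_ hp] pp.
    have : ln (INR p) <= ln (INR P).
      apply: ln_le; [apply: INR_gt0; exact: prime_gt0 | apply: INR_leq; lia].
    lra.
  lra.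
have hD := D_bound P.
have [_ tb] := tbound hy hlP hyl (pos_INR t) ht.
have : y ^ 7 <= y ^ 8 by apply: Rle_pow; [lra|lia].
set A := \big[Rplus/R0]_(0 <= p < t | prime p) (INR (a p) * (ln (INR P) - ln (INR p))).
set B := \big[Rplus/R0]_(t <= p < P | prime p) (INR (a p) * (ln (INR P) - ln (INR p))).
set S := \big[Rplus/R0]_(0 <= p < t | prime p) (INR (a p) * ln (INR P)).
move=> h7.
have hAS : A * ln (INR P) <= S * ln (INR P) by apply: Rmult_le_compat_r.
have hS : S * ln (INR P) <= INR t * ((6 + 4 * ln (INR P)) * ln (INR P)) * ln (INR P).
  by apply: Rmult_le_compat_r.
have hB : B * ln (INR P) <= 2 * D P * ln (INR P) by apply: Rmult_le_compat_r.
nra.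
Qed.


Lemma exp1_lt3 : exp 1 < 3.
Proof.
have h := exp_ineq1_le (- (1/6)).
have hu0 : 0 < exp (1/6) := exp_pos _.
have hu : exp (1/6) <= 6/5.
  rewrite exp_Ropp in h.
  have h' : 5/6 <= / exp (1/6) by lra.
  have := Rmult_le_compat_l _ _ _ (Rlt_le _ _ hu0) h'.
  rewrite Rinv_r; [lra|lra].
have -> : 1 = 1/6 + 1/6 + 1/6 + 1/6 + 1/6 + 1/6 by field.
rewrite !exp_plus.
set u := exp (1/6) in hu0 hu *.
have : u * u * u * u * u * u = u ^ 6 by ring.
have : u ^ 6 <= (6/5) ^ 6 by apply: pow_incr; lra.
lra.
Qed.

Lemma ln3_gt1 : 1 < ln 3.
Proof.
rewrite -(ln_exp 1); apply: ln_increasing; [exact: exp_pos| exact: exp1_lt3].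
Qed.

Lemma ln_pow2 k : ln (2 ^ k) = INR k * ln 2.
Proof. by rewrite ln_pow; lra. Qed.

Lemma final_small L Om lam K0 u :
  0 < lam -> lam <= K0 -> 0 <= Om -> Om <= 2 * L -> L = u * lam ^ 2 -> 0 <= u ->
  Rabs (Om - L / lam) <= (2 * K0 ^ 2 + K0) * u.
Proof.
move=> hl hK hO hOL eL hu.
have eLl : L / lam = u * lam by rewrite eL; field; lra.
rewrite eLl.
have hK2 : lam ^ 2 <= K0 ^ 2 by apply: pow_incr; lra.
apply: Rabs_le; split.
- have : u * lam <= u * K0 by apply: Rmult_le_compat_l.
  have : 0 <= u * K0 ^ 2 by apply: Rmult_le_pos => //; apply: pow_le; lra.
  lra.
- have : u * lam ^ 2 <= u * K0 ^ 2 by apply: Rmult_le_compat_l.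
  have : 0 <= u * lam by apply: Rmult_le_pos; lra.
  have : 0 <= u * K0 by apply: Rmult_le_pos; lra.
  lra.
Qed.

Lemma final_big L Om lP lam P u :
  0 < lam -> 12 <= lP -> lP - 6 <= lam -> lam <= lP + 6 ->
  P / 16 <= L -> 0 <= Om -> Om * lP <= 648 * P -> 0 <= Om * lP - L ->
  (Om * lP - L) * lP <= 5264 * P -> L = u * lam ^ 2 -> 0 <= u ->
  Rabs (Om - L / lam) <= 300000 * u.
Proof.
move=> hl hlP h1 h2 hL hO hB hX hC eL hu.
set X := Om * lP - L in hX hC.
set w := Om - L / lam.
have ew : w * lam = X + (lam - lP) * Om by rewrite /w /X; field; lra.
have hP16 : P <= 16 * L by lra.
have hup : (X + 6 * Om) * lP <= 146432 * L.
  have : 6 * Om * lP <= 3888 * P by lra.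
  lra.
have hlo : 6 * Om * lP <= 62208 * L by lra.
have hwl1 : w * lam <= X + 6 * Om.
  rewrite ew; have : (lam - lP) * Om <= 6 * Om by apply: Rmult_le_compat_r; lra.
  lra.
have hwl2 : - (6 * Om) <= w * lam.
  rewrite ew; have : - 6 * Om <= (lam - lP) * Om by apply: Rmult_le_compat_r; lra.
  lra.
have hlP0 : 0 < lP by lra.
have hU : w * lam * lP <= 146432 * (u * lam ^ 2).
  rewrite -eL; apply: Rle_trans hup; apply: Rmult_le_compat_r; lra.
have hLo : - (62208 * (u * lam ^ 2)) <= w * lam * lP.
  rewrite -eL.
  have := Rmult_le_compat_r lP _ _ (Rlt_le _ _ hlP0) hwl2; lra.
have hU' : w * lP <= 146432 * u * lam.
  apply: (Rmult_le_reg_r lam) => //.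
  have : w * lP * lam = w * lam * lP by ring.
  have : 146432 * u * lam * lam = 146432 * (u * lam ^ 2) by ring.
  lra.
have hLo' : - (62208 * u * lam) <= w * lP.
  apply: (Rmult_le_reg_r lam) => //.
  have : w * lP * lam = w * lam * lP by ring.
  have : - (62208 * u * lam) * lam = - (62208 * (u * lam ^ 2)) by ring.
  lra.
have hlam2 : u * lam <= u * (2 * lP) by apply: Rmult_le_compat_l; lra.
apply: Rabs_le; split.
- apply: (Rmult_le_reg_r lP) => //.
  have : - (300000 * u) * lP = - (150000 * (u * (2 * lP))) by ring.
  lra.
- apply: (Rmult_le_reg_r lP) => //.
  have : 300000 * u * lP = 150000 * (u * (2 * lP)) by ring.
  lra.
Qed.

Theorem lemma3p15 :
  exists C : R, Rlt 0 C /\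
    forall n : nat, reduced n -> (3 <= n)%N ->
      Rle (Rabs (Rminus (INR (Omega n)) (Rdiv (ln (INR n)) (ln (ln (INR n))))))
          (Rmult C (Rdiv (ln (INR n)) (pow (ln (ln (INR n))) 2))).
Proof.
set K0 := 43 * 2 ^ 24.
have hK0 : 0 < K0 by rewrite /K0; have := pow_lt 2 24 ltac:(lra); lra.
exists (300000 + (2 * K0 ^ 2 + K0)); split.
  have : 0 <= K0 ^ 2 by apply: pow_le; lra.
  lra.
move=> n hr hn3.
have hn0 := proj1 hr.
have [P [hP hO hPn hdiv]] := exists_P hn0.
have hg : good P (fun p => logn p n) := red_bounds hr hP hO hPn hdiv.
have eL := decomp_ln hr hP hO hPn.
have eO := decomp_Omega hr hP hO hPn.
have hA2 := est_A2 hg.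
have hOm := est_Om hg.
have hCp := est_Cpos P (fun p => logn p n).
cbv beta in hA2, hOm, hCp.
rewrite -eL -eO in hA2 hOm hCp.
set L := ln (INR n) in eL hA2 hOm hCp *.
set Om := INR (Omega n) in eO hOm hCp *.
have hL1 : 1 < L.
  apply: Rlt_le_trans ln3_gt1 _; apply: ln_le; first lra.
  have := INR_leq hn3; rewrite /=; lra.
set lam := ln L.
have hlam : 0 < lam by rewrite /lam -ln_1; apply: ln_increasing; lra.
set u := L / lam ^ 2.
have hu : 0 <= u by rewrite /u; apply: Rmult_le_pos; [lra| apply: Rlt_le; apply: Rinv_0_lt_compat; apply: pow_lt].
have eLu : L = u * lam ^ 2 by rewrite /u; field; lra.
have hO0 : 0 <= Om := pos_INR _.
have hl2 := ln_2_ge.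
have hl21 := ln_2_le1.
have hu' : 0 <= u := hu.
have hK2 : 0 <= K0 ^ 2 by apply: pow_le; lra.
have hc1 : 0 <= 300000 * u by lra.
have hc2 : 0 <= (2 * K0 ^ 2 + K0) * u by apply: Rmult_le_pos; lra.
suff : Rabs (Om - L / lam) <= 300000 * u \/ Rabs (Om - L / lam) <= (2 * K0 ^ 2 + K0) * u.
  rewrite -/L -/lam -/u.
  case=> h; lra.
case: (leqP (2 ^ 24) P) => hPb.
- left.
  have hA1 := est_A1 hg hPb.
  have hB := est_B hg hPb.
  have hC := est_C hg hPb.
  cbv beta in hA1, hB, hC.
  rewrite -eL -eO in hA1 hB hC.
  rewrite -/L -/Om in hA1 hB hC.
  set lP := ln (INR P) in hA1 hB hC.
  have hP0 : 0 < INR P := INR_gt0 (prime_gt0 hP).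
  have hlP : 24 * ln 2 <= lP.
    have e24 : ln (2 ^ 24) = 24 * ln 2.
      rewrite ln_pow2 (_ : INR 24 = 24) //; simpl; ring.
    rewrite -e24 /lP; apply: ln_le; first by apply: pow_lt; lra.
    have := INR_leq hPb; rewrite INR_expn (_ : INR 2 = 2) //; simpl; ring.
  have hlo : lP - 4 * ln 2 <= lam.
    have : ln (INR P / 16) <= lam.
      apply: ln_le => //; apply: Rdiv_lt_0_compat; lra.
    rewrite /Rdiv ln_mult; [|lra|apply: Rinv_0_lt_compat; lra].
    rewrite ln_Rinv; last lra.
    have -> : 16 = 2 ^ 4 by ring.
    rewrite ln_pow2 (_ : INR 4 = 4); last by simpl; ring.
    rewrite /lP; lra.
  have hhi : lam <= lP + 6 * ln 2.
    have : lam <= ln (2 ^ 6 * INR P).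
      apply: ln_le; first lra.
      lra.
    rewrite ln_mult; [|apply: pow_lt; lra|lra].
    rewrite ln_pow2 (_ : INR 6 = 6); last by simpl; ring.
    rewrite /lP; lra.
  apply: (@final_big L Om lP lam (INR P) u) => //; lra.
- right.
  have hPK : INR P < 2 ^ 24.
    have := INR_ltn hPb; rewrite INR_expn (_ : INR 2 = 2) //; simpl; ring.
  have hlamL : lam <= L - 1 by apply: ln_le_sub1; lra.
  apply: final_small => //; try lra.
  rewrite /K0; lra. nra.
Qed.
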